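(* For each $n\in\mathbb{N}$ let $P_n:C(B_n)\to\Pi_1(\mathbb{R}^n)$ be the interpolation projector whose nodes are the vertices of a regular simplex inscribed in the sphere $\{x:\|x\|=1\}$. Then $\|P_n\|_{B_n}\asymp\theta_n(B_n)$, i.e. there exist constants $c_1,c_2>0$ not depending on $n$ such that $c_1\theta_n(B_n)\le\|P_n\|_{B_n}\le c_2\theta_n(B_n)$ for all $n$.
   Context: $B_n=\{x\in\mathbb{R}^n:\|x\|\le1\}$ (Euclidean norm). $C(B_n)$ is the space of continuous real functions on $B_n$ with the max norm; $\Pi_1(\mathbb{R}^n)$ is the set of polynomials in $n$ variables of degree at most $1$. For a nondegenerate simplex $S\subset B_n$ with vertices $x^{(1)},\dots,x^{(n+1)}$, the corresponding interpolation projector $P:C(B_n)\to\Pi_1(\mathbb{R}^n)$ is defined by $Pf(x^{(j)})=f(x^{(j)})$, and $\|P\|_{B_n}$ is its operator norm on $C(B_n)$. $\theta_n(B_n)$ is the minimal value of $\|P\|_{B_n}$ over all nondegenerate simplices with vertices in $B_n$. *)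

(* Defs.v *)
From mathcomp Require Import all_boot all_order all_algebra.
From mathcomp Require Import all_classical all_reals all_analysis.
Import Order.TTheory GRing.Theory Num.Theory.
Import numFieldNormedType.Exports.
Local Open Scope ring_scope.
Local Open Scope classical_set_scope.

Section Defs.
Variable R : realType.

Definition enorm {n} (x : 'rV[R]_n) : R := Num.sqrt (\sum_(i < n) x 0 i ^+ 2).

Definition Bn (n : nat) : set 'rV[R]_n := [set x | enorm x <= 1].

(* A simplex in R^n is given by its n+1 vertices x j, j : 'I_n.+1.
   Its matrix A has rows (x j, 1); S is nondegenerate iff det A <> 0. *)
Definition simplex_mx {n} (x : 'I_n.+1 -> 'rV[R]_n) : 'M[R]_n.+1 :=
  \matrix_(j < n.+1, k < n.+1) (if @insub _ (fun m => (m < n)%N) _ (val k) is Some k' then x j 0 k' else 1).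

Definition nondegenerate {n} (x : 'I_n.+1 -> 'rV[R]_n) : Prop :=
  \det (simplex_mx x) != 0.

(* the polynomial of degree <= 1 with coefficients (a, b): y |-> a.y + b *)
Definition aff {n} (a : 'rV[R]_n) (b : R) (y : 'rV[R]_n) : R :=
  \sum_(i < n) a 0 i * y 0 i + b.

(* the polynomial (a,b) interpolates f at the vertices of the simplex,
   i.e. it is P f  *)
Definition interpolates {n} (x : 'I_n.+1 -> 'rV[R]_n) (f : 'rV[R]_n -> R)
  (a : 'rV[R]_n) (b : R) : Prop :=
  forall j, aff a b (x j) = f (x j).

(* ||P||_{B_n} = sup { ||P f||_{C(B_n)} : f in C(B_n), ||f||_{C(B_n)} <= 1 },
   written out pointwise: the sup of |Pf(y)| over y in B_n and such f. *)
Definition proj_norm {n} (x : 'I_n.+1 -> 'rV[R]_n) : R :=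
  sup [set t : R | exists (f : 'rV[R]_n -> R) (a : 'rV[R]_n) (b : R) (y : 'rV[R]_n),
         [/\ {within Bn n, continuous f},
             (forall z, Bn n z -> `|f z| <= 1),
             interpolates x f a b,
             Bn n y &
             t = `|aff a b y| ] ].

Definition theta (n : nat) : R :=
  inf [set t : R | exists x : 'I_n.+1 -> 'rV[R]_n,
         [/\ (forall j, Bn n (x j)), nondegenerate x & t = proj_norm x] ].

Definition regular_inscribed {n} (x : 'I_n.+1 -> 'rV[R]_n) : Prop :=
  [/\ nondegenerate x,
      (forall j, enorm (x j) = 1) &
      (forall i j k l, i != j -> k != l -> enorm (x i - x j) = enorm (x k - x l))].

End Defs.

(* Main.v *)
Require Import Defs.
From mathcomp Require Import all_boot all_order all_algebra.
From mathcomp Require Import all_classical all_reals all_analysis.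
From mathcomp Require Import ring lra.
Import Order.TTheory GRing.Theory Num.Theory.
Import numFieldNormedType.Exports.
Local Open Scope ring_scope.
Local Open Scope classical_set_scope.

Section S.
Variable R : realType.

Lemma cont_sum {I : Type} (s : seq I) n (F : I -> 'rV[R]_n -> R) :
  (forall i, continuous (F i)) -> continuous (fun y => \sum_(i <- s) F i y).
Proof.
move=> hF; elim: s => [|i s IH].
  have -> : (fun y => \sum_(i <- [::]) F i y) = fun _ => 0 by apply: funext => y; rewrite big_nil.
  exact: cst_continuous.
have -> : (fun y => \sum_(j <- i :: s) F j y) = (fun y => F i y + \sum_(j <- s) F j y) by apply: funext => y; rewrite big_cons.
move=> y; exact: (cvgD (hF i y) (IH y)).
Qed.

Lemma cont_aff n (a : 'rV[R]_n) b : continuous (aff R a b).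
Proof.
have h1 : continuous (fun y : 'rV[R]_n => \sum_(i < n) a 0 i * y 0 i).
  apply: (cont_sum _ _ (fun i (y : 'rV[R]_n) => a 0 i * y 0 i)) => i z.
  have hc := (@coord_continuous R 1 n 0 i z). exact: (@cvgMl_tmp _ _ _ _ _ (a 0 i) _ hc).
rewrite /aff; move=> y; exact: (cvgD (h1 y) (@cst_continuous _ _ b y)).
Qed.

Definition clamp (t : R) := (`|t + 1| - `|t - 1|) / 2.

Lemma cont_clamp : continuous clamp.
Proof.
move=> y; rewrite /clamp.
apply: cvgMr_tmp. apply: cvgB; apply: cvg_norm.
- apply: cvgD; [exact: cvg_id | exact: cvg_cst].
- apply: cvgB; [exact: cvg_id | exact: cvg_cst].
Qed.

Lemma cont_clamp_comp n (g : 'rV[R]_n -> R) : continuous g -> continuous (fun y => clamp (g y)).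
Proof.
move=> hg y; apply: continuous_comp; [exact: hg | exact: cont_clamp].
Qed.

Lemma clamp_le1 t : `|clamp t| <= 1.
Proof.
rewrite /clamp; have := ler_dist_dist (t+1) (t-1).
have -> : t + 1 - (t - 1) = 2 by ring.
move=> h; rewrite normrM normfV (@ger0_norm _ 2) // ler_pdivrMr // mul1r.
by rewrite (@ger0_norm _ 2) // in h.
Qed.

Lemma clamp_sign (b : bool) : clamp (if b then 1 else -1) = (if b then 1 else -1).
Proof. rewrite /clamp; case: b.
- have -> : (1:R) - 1 = 0 by ring. have -> : (1:R) + 1 = 2 by ring.
  by rewrite normr0 subr0 ger0_norm //; field.
- have -> : (-1:R) + 1 = 0 by ring. have -> : (-1:R) - 1 = -2 by ring.
  by rewrite normr0 sub0r normrN ger0_norm //; field.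
Qed.

Section Dot.
Context {n : nat}.
Implicit Types u v w : 'rV[R]_n.

Definition dot u v := \sum_(i < n) u 0 i * v 0 i.

Lemma affE a b y : aff R a b y = dot a y + b. Proof. by []. Qed.

Lemma dotC u v : dot u v = dot v u.
Proof. by apply: eq_bigr => i _; rewrite mulrC. Qed.

Lemma dotDl u v w : dot (u + v) w = dot u w + dot v w.
Proof. by rewrite /dot -big_split; apply: eq_bigr => i _; rewrite mxE mulrDl. Qed.

Lemma dotZl c u w : dot (c *: u) w = c * dot u w.
Proof. by rewrite /dot mulr_sumr; apply: eq_bigr => i _; rewrite mxE mulrA. Qed.

Lemma dotNl u w : dot (- u) w = - dot u w.
Proof. by rewrite /dot -sumrN; apply: eq_bigr => i _; rewrite mxE mulNr. Qed.

Lemma dotBl u v w : dot (u - v) w = dot u w - dot v w.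
Proof. by rewrite dotDl dotNl. Qed.

Lemma dot0l w : dot 0 w = 0.
Proof. by rewrite /dot big1 // => i _; rewrite mxE mul0r. Qed.

Lemma dotDr u v w : dot w (u + v) = dot w u + dot w v.
Proof. by rewrite dotC dotDl !(dotC w). Qed.
Lemma dotZr c u w : dot w (c *: u) = c * dot w u.
Proof. by rewrite dotC dotZl dotC. Qed.
Lemma dotNr u w : dot w (- u) = - dot w u.
Proof. by rewrite dotC dotNl dotC. Qed.
Lemma dotBr u v w : dot w (u - v) = dot w u - dot w v.
Proof. by rewrite dotDr dotNr. Qed.

Lemma dot_suml (I : finType) (F : I -> 'rV[R]_n) w :
  dot (\sum_j F j) w = \sum_j dot (F j) w.
Proof.
rewrite /dot exchange_big /=; apply: eq_bigr => i _.
by rewrite summxE mulr_suml.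
Qed.

Lemma dot_ge0 u : 0 <= dot u u.
Proof. by apply: sumr_ge0 => i _; rewrite -expr2 sqr_ge0. Qed.

Lemma dot_eq0 u : dot u u = 0 -> u = 0.
Proof.
move=> h; have := psumr_eq0P _ h.
move=> H; apply/matrixP => i j; rewrite !ord1 mxE.
have /eqP := H (fun k _ => ltac:(by rewrite -expr2 sqr_ge0)) j isT.
by rewrite mulf_eq0 orbb => /eqP.
Qed.

Lemma enormE u : enorm R u = Num.sqrt (dot u u).
Proof. by rewrite /enorm /dot; congr Num.sqrt; apply: eq_bigr => i _; rewrite expr2. Qed.

Lemma BnE u : Bn R n u <-> dot u u <= 1.
Proof. by rewrite /Bn /= enormE -{1}sqrtr1 ler_sqrt. Qed.

End Dot.

Section Mx.
Context {n : nat}.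

Definition coefv (a : 'rV[R]_n) (b : R) : 'cV[R]_n.+1 :=
  \col_k (if @insub _ (fun m => (m < n)%N) _ (val k) is Some k' then a 0 k' else b).

Lemma mulmx_coef (x : 'I_n.+1 -> 'rV[R]_n) a b j :
  (simplex_mx R x *m coefv a b) j 0 = aff R a b (x j).
Proof.
rewrite !mxE big_ord_recr /= !mxE insubN ?ltnn // mul1r affE /dot; congr (_ + _).
by apply: eq_bigr => i _; rewrite !mxE /= valK mulrC.
Qed.

Lemma coefv_surj (c : 'cV[R]_n.+1) : exists a b, coefv a b = c.
Proof.
exists (\row_i c (widen_ord (leqnSn n) i) 0), (c ord_max 0).
apply/matrixP => k l; rewrite !ord1 mxE.
case: insubP => [k' _ hk|hk]; first by rewrite mxE; congr (c _ _); apply: val_inj.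
congr (c _ _); apply: val_inj => /=; move: (ltn_ord k) hk; rewrite ltnS.
by case: ltngtP.
Qed.

Lemma coefv_inj a b a' b' : coefv a b = coefv a' b' -> a = a' /\ b = b'.
Proof.
move=> /matrixP h; split.
  apply/matrixP => i j; rewrite !ord1.
  by have := h (widen_ord (leqnSn n) j) 0; rewrite !mxE /= valK.
by have := h ord_max 0; rewrite !mxE /= insubN ?ltnn.
Qed.

Lemma unit_simplex (x : 'I_n.+1 -> 'rV[R]_n) : Defs.nondegenerate R x -> simplex_mx R x \in unitmx.
Proof. by rewrite /nondegenerate unitmxE unitfE. Qed.

Lemma interp_exists (x : 'I_n.+1 -> 'rV[R]_n) : Defs.nondegenerate R x ->
  forall v : 'I_n.+1 -> R, exists a b, forall j, aff R a b (x j) = v j.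
Proof.
move=> /unit_simplex hu v.
have [a [b hab]] := coefv_surj (invmx (simplex_mx R x) *m \col_j v j).
exists a, b => j; rewrite -mulmx_coef hab mulKVmx // mxE //.
Qed.

Lemma interp_unique (x : 'I_n.+1 -> 'rV[R]_n) a b a' b' : Defs.nondegenerate R x ->
  (forall j, aff R a b (x j) = aff R a' b' (x j)) -> a = a' /\ b = b'.
Proof.
move=> /unit_simplex hu h; apply: coefv_inj.
have : simplex_mx R x *m coefv a b = simplex_mx R x *m coefv a' b'.
  by apply/matrixP => j l; rewrite !ord1 !mulmx_coef.
by move=> /(congr1 (mulmx (invmx (simplex_mx R x)))); rewrite !mulKmx.
Qed.

End Mx.
Arguments interp_exists {n x}.
Arguments interp_unique {n x a b a' b'}.

Lemma ex_max (T : finType) (t0 : T) (F : T -> R) : exists t, forall u, F u <= F t.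
Proof.
have [t _ h] := @arg_maxP _ _ _ t0 xpredT F isT.
by exists t => u; apply: h.
Qed.

Section Main.
Context {n : nat}.
Implicit Types (x : 'I_n.+1 -> 'rV[R]_n).

Lemma dot_sumr (I : finType) (F : I -> 'rV[R]_n) w :
  dot w (\sum_j F j) = \sum_j dot w (F j).
Proof. by rewrite dotC dot_suml; apply: eq_bigr => j _; rewrite dotC. Qed.

Lemma dot_expand (u v : 'rV[R]_n) c :
  dot (u + c *: v) (u + c *: v) = dot u u + 2 * c * dot u v + c ^+ 2 * dot v v.
Proof. rewrite !dotDl !dotDr !dotZl !dotZr (dotC v u); ring. Qed.

Lemma parallelogram (u v : 'rV[R]_n) :
  dot (u - v) (u - v) + dot (u + v) (u + v) = 2 * dot u u + 2 * dot v v.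
Proof. rewrite !(dotDl, dotNl, dotDr, dotNr) (dotC v u); ring. Qed.

Lemma dot_amgm (u v : 'rV[R]_n) : `|dot u v| <= (dot u u + dot v v) / 2.
Proof.
have h1 := dot_ge0 (u - v); have h2 := dot_ge0 (u + v).
move: h1 h2; rewrite !(dotDl, dotNl, dotDr, dotNr) (dotC v u) => h1 h2.
rewrite ler_norml; apply/andP; split; lra.
Qed.

Lemma aff_lin (I : finType) (c : I -> R) (A : I -> 'rV[R]_n) (B : I -> R) y :
  aff R (\sum_j c j *: A j) (\sum_j c j * B j) y = \sum_j c j * aff R (A j) (B j) y.
Proof.
rewrite affE dot_suml -big_split; apply: eq_bigr => j _.
by rewrite dotZl affE mulrDr.
Qed.

Lemma sum_delta (F : 'I_n.+1 -> R) k : \sum_j F j * (j == k)%:R = F k.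
Proof.
rewrite (bigD1 k) //= eqxx mulr1 big1 ?addr0 // => j /negPf ->; by rewrite mulr0.
Qed.

Definition is_basis x (A : 'I_n.+1 -> 'rV[R]_n) (B : 'I_n.+1 -> R) :=
  forall j k, aff R (A j) (B j) (x k) = (j == k)%:R.

Lemma basis_exists x : Defs.nondegenerate R x -> exists A B, is_basis x A B.
Proof.
move=> nd.
have h : forall j, exists p : 'rV[R]_n * R, forall k, aff R p.1 p.2 (x k) = (j == k)%:R.
  move=> j; have [a [b hab]] := interp_exists nd (fun k => (j == k)%:R).
  by exists (a, b).
have [f hf] := boolp.choice h.
by exists (fun j => (f j).1), (fun j => (f j).2).
Qed.

Lemma interp_repr x A B f a b : Defs.nondegenerate R x -> is_basis x A B ->
  interpolates R x f a b ->
  forall y, aff R a b y = \sum_j f (x j) * aff R (A j) (B j) y.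
Proof.
move=> nd hb hi y.
have [-> ->] : a = \sum_j f (x j) *: A j /\ b = \sum_j f (x j) * B j.
  apply: (interp_unique nd) => k; rewrite aff_lin hi.
  under eq_bigr do rewrite hb.
  by rewrite sum_delta.
by rewrite aff_lin.
Qed.

Lemma elem_bound x A B f a b y : Defs.nondegenerate R x -> is_basis x A B ->
  interpolates R x f a b -> (forall j, `|f (x j)| <= 1) ->
  `|aff R a b y| <= \sum_j `|aff R (A j) (B j) y|.
Proof.
move=> nd hb hi hf; rewrite (interp_repr _ _ _ _ _ _ nd hb hi).
apply: (le_trans (ler_norm_sum _ _ _)); apply: ler_sum => j _.
by rewrite normrM ler_piMl.
Qed.

Lemma aff_bound (a : 'rV[R]_n) b y : Bn R n y ->
  `|aff R a b y| <= (dot a a + 1) / 2 + `|b|.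
Proof.
move=> /BnE hy; rewrite affE; apply: (le_trans (ler_normD _ _)).
rewrite lerD2r; apply: (le_trans (dot_amgm a y)); lra.
Qed.

Definition pset x := [set t : R | exists (f : 'rV[R]_n -> R) (a : 'rV[R]_n) (b : R) (y : 'rV[R]_n),
         [/\ {within Bn R n, continuous f},
             (forall z, Bn R n z -> `|f z| <= 1),
             interpolates R x f a b,
             Bn R n y &
             t = `|aff R a b y| ] ].

Lemma proj_normE x : proj_norm R x = sup (pset x).
Proof. by []. Qed.

Lemma pset_ub x A B : Defs.nondegenerate R x -> is_basis x A B ->
  (forall j, Bn R n (x j)) ->
  ubound (pset x) (\sum_j ((dot (A j) (A j) + 1) / 2 + `|B j|)).
Proof.
move=> nd hb hx t [f [a [b [y [_ hf hi hy ->]]]]].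
apply: (le_trans (elem_bound _ _ _ _ _ _ y nd hb hi (fun j => hf _ (hx j)))).
by apply: ler_sum => j _; apply: aff_bound.
Qed.

Lemma pset_has_sup x : Defs.nondegenerate R x -> (forall j, Bn R n (x j)) ->
  has_ubound (pset x).
Proof.
move=> nd hx; have [A [B hb]] := basis_exists _ nd.
by eexists; apply: (pset_ub _ _ _ nd hb hx).
Qed.


Definition sg (b : bool) : R := if b then 1 else -1.

Lemma sg_sqr b : sg b ^+ 2 = 1.
Proof. by case: b; rewrite /sg ?sqrrN expr1n. Qed.

Lemma basis_norm x A B : (0 < n)%N -> (forall j, Bn R n (x j)) -> is_basis x A B ->
  forall j, 4^-1 <= dot (A j) (A j).
Proof.
move=> hn hx hb j.
have [l hl] : exists l : 'I_n.+1, j != l.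
  case: (eqVneq j ord0) => [->|hj]; last by exists ord0.
  by exists ord_max; rewrite -(inj_eq val_inj) /= eq_sym -lt0n.
set v := x j - x l.
have h1 : dot (A j) v = 1.
  rewrite dotBr; have := hb j j; have := hb j l; rewrite !affE eqxx (negbTE hl) /=.
  move=> h2 h3; lra.
have h2 : dot v v <= 4.
  have := parallelogram (x j) (x l); have := dot_ge0 (x j + x l).
  have /BnE := hx j; have /BnE := hx l; rewrite /v; lra.
have := dot_ge0 (A j + (- 4^-1) *: v); rewrite dot_expand h1.
have -> : (- 4^-1 : R) ^+ 2 = 16^-1 by field.
lra.
Qed.

Lemma sign_choice (A : 'I_n.+1 -> 'rV[R]_n) : exists s : 'I_n.+1 -> R,
  (forall j, s j = 1 \/ s j = -1) /\
  \sum_j dot (A j) (A j) <= dot (\sum_j s j *: A j) (\sum_j s j *: A j).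
Proof.
pose S (e : {ffun 'I_n.+1 -> bool}) := \sum_j sg (e j) *: A j.
have [e he] := ex_max _ ([ffun=> true] : {ffun 'I_n.+1 -> bool}) (fun e => dot (S e) (S e)).
exists (fun j => sg (e j)); split; first by move=> j; rewrite /sg; case: (e j); [left|right].
have hk : forall k, dot (A k) (A k) <= sg (e k) * dot (S e) (A k).
  move=> k; pose e' := [ffun j => if j == k then ~~ e j else e j].
  have hS : S e' = S e + (- 2 * sg (e k)) *: A k.
    rewrite /S (bigD1 k) //= [in RHS](bigD1 k) //= ffunE eqxx.
    have -> : \sum_(i < n.+1 | i != k) sg (e' i) *: A i = \sum_(i < n.+1 | i != k) sg (e i) *: A i.
      by apply: eq_bigr => i /negPf hi; rewrite ffunE hi.
    rewrite [RHS]addrAC -scalerDl; congr (_ *: _ + _).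
    by rewrite /sg; case: (e k) => /=; ring.
  have := he e'; rewrite /= hS dot_expand exprMn sg_sqr.
  have := sg_sqr (e k); lra.
rewrite -/(S e) [X in _ <= dot _ X]/S dot_sumr.
by apply: ler_sum => k _; rewrite dotZr.
Qed.


Lemma proj_norm_lb x : (0 < n)%N -> (forall j, Bn R n (x j)) -> Defs.nondegenerate R x ->
  Num.sqrt n%:R / 2 <= proj_norm R x.
Proof.
move=> hn hx nd.
have [A [B hb]] := basis_exists _ nd.
have [s [hs hsum]] := sign_choice A.
set S := \sum_j s j *: A j in hsum *.
set Bs := \sum_j s j * B j.
have hq : n%:R / 4 <= dot S S.
  apply: le_trans hsum.
  have h : \sum_(j < n.+1) (4^-1 : R) <= \sum_j dot (A j) (A j).
    by apply: ler_sum => j _; exact: (basis_norm _ _ _ hn hx hb).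
  apply: le_trans h; rewrite sumr_const card_ord mulrS -mulr_natr.
  have := ler0n R n; lra.
have hval : forall k, aff R S Bs (x k) = s k.
  by move=> k; rewrite aff_lin; under eq_bigr do rewrite hb; rewrite sum_delta.
pose f y := clamp (aff R S Bs y).
have hf_cont : {within Bn R n, continuous f}.
  by apply: continuous_subspaceT; apply: cont_clamp_comp; apply: cont_aff.
have hf_b : forall z, Bn R n z -> `|f z| <= 1 by move=> z _; apply: clamp_le1.
have hf_i : interpolates R x f S Bs.
  move=> k; rewrite /f hval; case: (hs k) => ->; [exact: (esym (clamp_sign true))|exact: (esym (clamp_sign false))].
have hmem : forall y, Bn R n y -> pset x `|aff R S Bs y|.
  by move=> y hy; exists f, S, Bs, y; split.
have hsup : forall y, Bn R n y -> `|aff R S Bs y| <= proj_norm R x.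
  move=> y hy; rewrite proj_normE; apply: sup_upper_bound; last exact: hmem y hy.
  by split; [exists `|aff R S Bs y|; exact: hmem y hy | exact: pset_has_sup _ nd hx].
have n0 : (0 : R) < n%:R by rewrite ltr0n.
have q0 : 0 < dot S S by lra.
set q := dot S S in hq q0 hsup *.
set r := Num.sqrt q.
have r0 : 0 < r by rewrite /r sqrtr_gt0.
have hr2 : r ^+ 2 = q by rewrite /r sqr_sqrtr // ltW.
set u := r^-1 *: S.
have hu : dot u u = 1.
  rewrite /u dotZl dotZr -/q -hr2; field; exact: lt0r_neq0.
have hBu : Bn R n u by apply/BnE; rewrite hu.
have hBu' : Bn R n (- u) by apply/BnE; rewrite dotNl dotNr opprK hu.
have hd : aff R S Bs u - aff R S Bs (- u) = 2 * r.
  rewrite !affE dotNr /u dotZr -/q -hr2; field; exact: lt0r_neq0.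
have hlr : r <= proj_norm R x.
  have h1 := hsup _ hBu; have h2 := hsup _ hBu'.
  have h3 : `|aff R S Bs u - aff R S Bs (- u)| <= `|aff R S Bs u| + `|aff R S Bs (- u)|.
    by rewrite -(normrN (aff R S Bs (- u))) ler_normD.
  rewrite hd ger0_norm in h3; lra.
apply: le_trans hlr.
have hs0 : 0 <= Num.sqrt (n%:R : R) / 2 by rewrite divr_ge0 // sqrtr_ge0.
rewrite -(ger0_norm hs0) -sqrtr_sqr /r ler_sqrt; last lra.
rewrite exprMn sqr_sqrtr ?ler0n //.
have -> : (2^-1 : R) ^+ 2 = 4^-1 by field.
lra.
Qed.


Lemma amgm_abs (k t : R) : 0 < k -> k * `|t| <= (k ^+ 2 * t ^+ 2 + 1) / 2.
Proof.
move=> k0; have := sqr_ge0 (k * `|t| - 1); rewrite -(real_normK (num_real t)).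
have := normr_ge0 t; nra.
Qed.

Lemma dot_sub_expand (u v : 'rV[R]_n) :
  dot (u - v) (u - v) = dot u u - 2 * dot u v + dot v v.
Proof. rewrite !(dotDl, dotNl, dotDr, dotNr) (dotC v u); ring. Qed.

Lemma sqrt_eq_sq (a b : R) : 0 <= a -> 0 <= b -> Num.sqrt a = Num.sqrt b -> a = b.
Proof. by move=> ha hb h; rewrite -(sqr_sqrtr ha) -(sqr_sqrtr hb) h. Qed.

Lemma pset_nonempty x : pset x !=set0.
Proof.
exists `|aff R (0 : 'rV[R]_n) 0 0|; exists (fun _ => 0), 0, 0, 0; split => //.
- by apply: continuous_subspaceT; exact: cst_continuous.
- by move=> z _; rewrite normr0.
- by move=> j; rewrite affE dot0l addr0.
- by apply/BnE; rewrite dot0l.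
Qed.

Lemma reg_upper x : (0 < n)%N -> regular_inscribed R x ->
  proj_norm R x <= Num.sqrt n%:R + 1.
Proof.
move=> hn [nd hnorm hedge].
have hx1 : forall j, dot (x j) (x j) = 1.
  move=> j; apply: sqrt_eq_sq; rewrite ?dot_ge0 ?ler01 // sqrtr1 -enormE; exact: hnorm.
have hxB : forall j, Bn R n (x j) by move=> j; apply/BnE; rewrite hx1.
pose i0 : 'I_n.+1 := ord0. pose i1 : 'I_n.+1 := ord_max.
have h01 : i0 != i1 by rewrite -(inj_eq val_inj) /= eq_sym -lt0n.
set g := dot (x i0) (x i1).
have hg : forall i j, i != j -> dot (x i) (x j) = g.
  move=> i j hij; have := hedge i j i0 i1 hij h01; rewrite !enormE.
  move/sqrt_eq_sq; rewrite !dot_ge0 !dot_sub_expand !hx1 => /(_ isT isT).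
  rewrite -/g; lra.
have hg1 : 1 - g != 0.
  apply/negP => /eqP hg1.
  have h0 : x i0 - x i1 = 0.
    apply: dot_eq0; rewrite dot_sub_expand !hx1 -/g; lra.
  move: nd; rewrite /Defs.nondegenerate (determinant_alternate h01) ?eqxx // => k.
  rewrite !mxE; case: insub => // k'.
  by move/eqP: h0; rewrite subr_eq0 => /eqP ->.
set al := (1 - g)^-1.
set be := - g * al.
have hab : al + be = 1 by rewrite /be /al; field.
have hb : is_basis x (fun j => al *: x j) (fun _ => be).
  move=> j k; rewrite affE dotZl; case: (eqVneq j k) => [->|hjk] /=.
    by rewrite hx1 mulr1.
  by rewrite hg // /be; ring.
have [hsumA hsumB] : \sum_j 1 *: (al *: x j) = 0 /\ \sum_(j < n.+1) 1 * be = 1.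
  apply: (interp_unique nd) => k; rewrite aff_lin affE dot0l add0r.
  under eq_bigr do rewrite hb.
  by rewrite (bigD1 k) //= eqxx mulr1 big1 ?addr0 // => j /negPf ->; rewrite mulr0.
have hbe : be * n.+1%:R = 1.
  by move: hsumB; under eq_bigr do rewrite mul1r; rewrite sumr_const card_ord mulr_natr.
have hal_n : al * n.+1%:R = n%:R.
  have -> : al = 1 - be by lra.
  by rewrite mulrBl hbe mul1r -natr1; ring.
have n0 : (0 : R) < n%:R by rewrite ltr0n.
have hn1 : (0 : R) < n.+1%:R by rewrite ltr0n.
have al0 : 0 < al.
  have : al * n.+1%:R > 0 by rewrite hal_n.
  by rewrite pmulr_lgt0.
have be0 : 0 < be.
  have : be * n.+1%:R > 0 by rewrite hbe.
  by rewrite pmulr_lgt0.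
have hframe : forall z, dot z z = al * \sum_j dot z (x j) ^+ 2.
  move=> z.
  have hi : interpolates R x (aff R z 0) z 0 by [].
  have := interp_repr _ _ _ _ _ _ nd hb hi z.
  rewrite affE addr0 => ->.
  have hs0 : \sum_j dot z (x j) = 0.
    have : dot z (\sum_j 1 *: (al *: x j)) = 0 by rewrite hsumA dotC dot0l.
    rewrite dot_sumr; under eq_bigr do rewrite !dotZr mul1r.
    rewrite -mulr_sumr => /eqP; rewrite mulf_eq0 (negbTE (lt0r_neq0 al0)) /= => /eqP //.
  rewrite mulr_sumr.
  have -> : \sum_j aff R z 0 (x j) * aff R (al *: x j) be z =
            \sum_j (al * dot z (x j) ^+ 2 + be * dot z (x j)).
    by apply: eq_bigr => j _; rewrite !affE addr0 dotZl (dotC (x j)); ring.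
  by rewrite big_split /= -mulr_sumr -mulr_sumr hs0 mulr0 addr0.
rewrite proj_normE; apply: ge_sup; first exact: pset_nonempty.
move=> t [f [a [b [y [_ hf hi hy ->]]]]].
apply: (le_trans (elem_bound _ _ _ _ _ _ y nd hb hi (fun j => hf _ (hxB j)))).
have hterm : forall j, `|aff R (al *: x j) be y| <= al * `|dot y (x j)| + be.
  move=> j; rewrite affE dotZl (dotC (x j)); apply: (le_trans (ler_normD _ _)).
  by rewrite normrM (gtr0_norm al0) (gtr0_norm be0).
apply: (le_trans (ler_sum _ (fun j _ => hterm j))).
rewrite big_split /= sumr_const card_ord -[be *+ _]mulr_natr hbe lerD2r -mulr_sumr.
set k := Num.sqrt (n%:R : R).
have k0 : 0 < k by rewrite sqrtr_gt0.
have hk2 : k ^+ 2 = n%:R by rewrite sqr_sqrtr // ltW.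
have hyy : dot y y <= 1 by apply/BnE.
have hsum : k * \sum_j `|dot y (x j)| <= (k ^+ 2 * (dot y y / al) + n.+1%:R) / 2.
  rewrite mulr_sumr.
  have h1 : \sum_j k * `|dot y (x j)| <= \sum_j (k ^+ 2 * dot y (x j) ^+ 2 + 1) / 2.
    by apply: ler_sum => j _; apply: amgm_abs.
  apply: (le_trans h1).
  have hS : \sum_j dot y (x j) ^+ 2 = dot y y / al.
    by rewrite (hframe y) mulrC mulrA mulVf ?lt0r_neq0 // mul1r.
  by rewrite -mulr_suml big_split /= -mulr_sumr sumr_const card_ord hS.
have hfin : al * (k * \sum_j `|dot y (x j)|) <= k * k.
  apply: (le_trans (ler_wpM2l (ltW al0) hsum)).
  rewrite hk2 -expr2 hk2.
  have -> : al * ((n%:R * (dot y y / al) + n.+1%:R) / 2) = (n%:R * dot y y + al * n.+1%:R) / 2.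
    by field; apply: lt0r_neq0.
  rewrite hal_n; have := ler_wpM2l (ltW n0) hyy; lra.
have : k * (al * \sum_j `|dot y (x j)|) <= k * k by rewrite mulrCA.
by rewrite ler_pM2l.
Qed.

End Main.

Lemma cor_body n (x : 'I_n.+1 -> 'rV[R]_n) : (0 < n)%N -> regular_inscribed R x ->
  theta R n <= proj_norm R x <= 4 * theta R n.
Proof.
move=> hn hreg.
have hxB : forall j, Bn R n (x j).
  case: hreg => _ hnorm _ j; apply/BnE.
  have := hnorm j; rewrite enormE => h.
  by rewrite -(sqr_sqrtr (dot_ge0 (x j))) h expr1n.
have nd : Defs.nondegenerate R x by case: hreg.
set TS := [set t : R | exists x : 'I_n.+1 -> 'rV[R]_n,
         [/\ (forall j, Bn R n (x j)), Defs.nondegenerate R x & t = proj_norm R x] ].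
have hT : theta R n = inf TS by [].
have hlb : lbound TS (Num.sqrt (n%:R : R) / 2).
  by move=> t [y [hy ndy ->]]; apply: proj_norm_lb.
have hmem : TS (proj_norm R x) by exists x.
have h1 : theta R n <= proj_norm R x.
  by rewrite hT; apply: ge_inf => //; exists (Num.sqrt (n%:R : R) / 2).
have h2 : Num.sqrt (n%:R : R) / 2 <= theta R n.
  by rewrite hT; apply: lb_le_inf => //; exists (proj_norm R x).
have h3 := reg_upper _ hn hreg.
have h4 : 1 <= Num.sqrt (n%:R : R).
  by rewrite -[X in X <= _]sqrtr1 ler_sqrt ?ler0n // ler1n.
rewrite h1 /=; lra.
Qed.

End S.
Local Close Scope classical_set_scope.

Theorem corollary5 (R : realType) :
  exists c1 c2 : R, [/\ 0 < c1, 0 < c2 &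
    forall (n : nat) (x : 'I_n.+1 -> 'rV[R]_n), (0 < n)%N ->
      regular_inscribed R x ->
      c1 * theta R n <= proj_norm R x <= c2 * theta R n].
Proof.
exists 1, 4; split => // n x hn hreg.
by rewrite mul1r; apply: cor_body.
Qed.
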